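(* Let $p$ be a prime and $k,n$ positive integers. Then: (1) $P(p^{k+1},n)$ equals either $P(p^k,n)$ or $pP(p^k,n)$. (2) If $k\ge2$ and $P(p^{k+1},n)=pP(p^k,n)$, then $P(p^{k+2},n)=pP(p^{k+1},n)$. (3) If $P(p^{N+1},n)=pP(p^N,n)$ for some integer $N\ge2$, then $P(p^{N+k},n)=p^kP(p^N,n)$ for all positive integers $k$.
   Context: For positive integers $m,n$, let $\mathbf{Z}_m$ be the integers modulo $m$ and $T:\mathbf{Z}_m^n\to\mathbf{Z}_m^n$, $T(a_0,\dots,a_{n-1})=(a_0+a_1,a_1+a_2,\dots,a_{n-1}+a_0)$. For $\mathbf{a}\in\mathbf{Z}_m^n$ the cycle length of $(T^k\mathbf{a})_{k\ge0}$ is the smallest positive integer $P$ such that there is $N$ with $T^{k+P}\mathbf{a}=T^k\mathbf{a}$ for all $k\ge N$. $P(m,n)$ denotes the maximum of these cycle lengths over all $\mathbf{a}\in\mathbf{Z}_m^n$. *)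

(* Defs.v *)
From HB Require Import structures.
From mathcomp Require Import all_boot all_algebra.
From Stdlib Require Import ClassicalEpsilon.
Set Implicit Arguments. Unset Strict Implicit. Unset Printing Implicit Defensive.
Import GRing.Theory.
Local Open Scope ring_scope.

(* Vectors in Z_m^n, indexed by 'I_n = {0,...,n-1}.  'Z_m is only the
   integers mod m for m >= 2 (always the case below: m = p^j, j >= 1). *)
Definition Zvec (m n : nat) := {ffun 'I_n -> 'Z_m}.

Definition Tmap (m n : nat) (a : Zvec m n) : Zvec m n :=
  [ffun i => a i + a (ordS i)].

Definition is_eventual_period (m n : nat) (a : Zvec m n) (P : nat) : Prop :=
  exists N : nat, forall k : nat, (N <= k)%N ->
    iter (k + P) (@Tmap m n) a = iter k (@Tmap m n) a.

Definition is_cycle_length (m n : nat) (a : Zvec m n) (L : nat) : Prop :=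
  (0 < L)%N /\ is_eventual_period a L /\
  forall P : nat, (0 < P)%N -> is_eventual_period a P -> (L <= P)%N.

(* the cycle length of a (the unique L with is_cycle_length a L; it exists
   since Z_m^n is finite) *)
Definition cycle_length (m n : nat) (a : Zvec m n) : nat :=
  epsilon (inhabits 0%N) (fun L => is_cycle_length a L).

Definition Pmax (m n : nat) : nat :=
  (\max_(a : Zvec m n) cycle_length a)%N.

(* Main.v *)
Require Import Defs.
From HB Require Import structures.
From mathcomp Require Import all_boot all_algebra.
From Stdlib Require Import ClassicalEpsilon Classical.
From mathcomp Require Import zify.
Set Implicit Arguments. Unset Strict Implicit. Unset Printing Implicit Defensive.
Import GRing.Theory.
Open Scope ring_scope.
Definition dvdM (d : int) (a b : nat) (X : 'M[int]_(a, b)) :=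
  forall i j, (d %| X i j)%Z.

Lemma dvdM0 d a b : dvdM d (0 : 'M[int]_(a, b)).
Proof. by move=> i j; rewrite mxE dvdz0. Qed.

Lemma dvdMD d a b (X Y : 'M[int]_(a, b)) : dvdM d X -> dvdM d Y -> dvdM d (X + Y).
Proof. by move=> hX hY i j; rewrite mxE rpredD. Qed.

Lemma dvdMN d a b (X : 'M[int]_(a, b)) : dvdM d X -> dvdM d (- X).
Proof. by move=> hX i j; rewrite mxE rpredN. Qed.

Lemma dvdMB d a b (X Y : 'M[int]_(a, b)) : dvdM d X -> dvdM d Y -> dvdM d (X - Y).
Proof. by move=> hX hY; apply: dvdMD => //; apply: dvdMN. Qed.

Lemma dvdM_mull d a b c (X : 'M[int]_(a, b)) (Y : 'M[int]_(b, c)) :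
  dvdM d Y -> dvdM d (X *m Y).
Proof. by move=> hY i j; rewrite mxE rpred_sum // => l _; apply: dvdz_mull. Qed.

Lemma dvdM_mulr d a b c (X : 'M[int]_(a, b)) (Y : 'M[int]_(b, c)) :
  dvdM d X -> dvdM d (X *m Y).
Proof. by move=> hX i j; rewrite mxE rpred_sum // => l _; apply: dvdz_mulr. Qed.

Lemma dvdM_mul d e a b c (X : 'M[int]_(a, b)) (Y : 'M[int]_(b, c)) :
  dvdM d X -> dvdM e Y -> dvdM (d * e) (X *m Y).
Proof. by move=> hX hY i j; rewrite mxE rpred_sum // => l _; apply: dvdz_mul. Qed.

Lemma dvdM_scale d e a b (X : 'M[int]_(a, b)) :
  dvdM d X -> dvdM (e * d) (e *: X).
Proof. by move=> hX i j; rewrite mxE dvdz_mul. Qed.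

Lemma dvdM_scaler e a b (X : 'M[int]_(a, b)) : dvdM e (e *: X).
Proof. by move=> i j; rewrite mxE dvdz_mulr. Qed.

Lemma dvdM_trans d e a b (X : 'M[int]_(a, b)) : (d %| e)%Z -> dvdM e X -> dvdM d X.
Proof. by move=> hde hX i j; apply: dvdz_trans (hX i j). Qed.

Lemma dvdM_sum d a b (I : Type) (r : seq I) (P : pred I) (F : I -> 'M[int]_(a, b)) :
  (forall i, P i -> dvdM d (F i)) -> dvdM d (\sum_(i <- r | P i) F i).
Proof.
move=> h; elim/big_rec: _ => [|i x Pi hx]; first exact: dvdM0.
by apply: dvdMD => //; apply: h.
Qed.

Lemma dvdM_unscale d e a b (X : 'M[int]_(a, b)) :
  e != 0 -> dvdM (e * d) (e *: X) -> dvdM d X.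
Proof. by move=> he hX i j; have := hX i j; rewrite mxE dvdz_mul2l. Qed.

Lemma dvdM_muln d a b (X : 'M[int]_(a, b)) k : dvdM d X -> dvdM d (X *+ k).
Proof. by move=> hX i j; rewrite mulmxnE; apply: rpredMn. Qed.
Section Alg.
Variable n' : nat.
Local Notation R := 'M[int]_(n'.+1).

Lemma dvdR_mull d (X Y : R) : dvdM d Y -> dvdM d (X * Y).
Proof. by rewrite -mulmxE; apply: dvdM_mull. Qed.
Lemma dvdR_mulr d (X Y : R) : dvdM d X -> dvdM d (X * Y).
Proof. by rewrite -mulmxE; apply: dvdM_mulr. Qed.

Lemma expansion (a F : R) (c : int) N Q p :
  a ^+ (N + Q) - a ^+ N = c *: F ->
  (a ^+ N) ^+ p * ((a ^+ Q) ^+ p - 1) =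
  \sum_(i < p) (c ^+ i.+1 * ('C(p, i.+1))%:R) *: ((a ^+ N) ^+ (p - i.+1) * F ^+ i.+1).
Proof.
move=> hX.
have ub : a ^+ N * (a ^+ Q - 1) = c *: F by rewrite mulrBr mulr1 -exprD.
have cub : GRing.comm (a ^+ N) (a ^+ Q - 1).
  by rewrite /GRing.comm mulrBr mulrBl mulr1 mul1r -!exprD addnC.
set u := a ^+ N; set b := a ^+ Q.
rewrite -{1}(subrK 1 b) exprD1n.
rewrite big_ord_recl /= expr0 bin0 mulr1n addrC addKr mulr_sumr.
apply: eq_bigr => i _; rewrite /bump /= add1n mulrnAr.
have hi : (i.+1 <= p)%N by apply: ltn_ord.
rewrite -{1}(subnK hi) exprD -mulrA -exprMn_comm // ub exprZn scalerAr.
by rewrite -scaler_nat -!scalerAr scalerA mulrC.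
Qed.
End Alg.

Section Alg2.
Variable n' : nat.
Local Notation R := 'M[int]_(n'.+1).

Definition dvdF (d : int) (X : R) : R := map_mx (fun x => (x %/ d)%Z) X.
Lemma dvdF_spec d (X : R) : dvdM d X -> X = d *: dvdF d X.
Proof. by move=> h; apply/matrixP => i j; rewrite !mxE mulrC divzK. Qed.

Lemma dvdzn (a b : nat) : (Posz a %| Posz b)%Z = (a %| b)%N.
Proof. by []. Qed.

Lemma PoszXn (a j : nat) : (Posz a) ^+ j = Posz (a ^ j).
Proof. by rewrite -natz -natrX natz. Qed.

Lemma powE (a : R) N Q p :
  a ^+ (N * p + Q * p) - a ^+ (N * p) = (a ^+ N) ^+ p * ((a ^+ Q) ^+ p - 1).
Proof. by rewrite mulrBr mulr1 -!exprM -exprD -mulnDl. Qed.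

Lemma M2 (a : R) p k N Q : prime p -> (0 < k)%N ->
  dvdM (Posz (p ^ k)) (a ^+ (N + Q) - a ^+ N) ->
  dvdM (Posz (p ^ k.+1)) (a ^+ (N * p + Q * p) - a ^+ (N * p)).
Proof.
move=> pp k0 h; rewrite powE (expansion p (dvdF_spec h)).
apply: dvdM_sum => i _; apply: dvdM_trans (dvdM_scaler _ _).
rewrite PoszXn natz -PoszM dvdzn -expnM.
case: i => [[|i]] hi /=.
  by rewrite muln1 bin1 expnS mulnC.
apply: dvdn_mulr; apply: dvdn_exp2l; nia.
Qed.

Lemma M3body (a : R) p k N Q : prime p -> (2 <= k)%N ->
  forall F, a ^+ (N + Q) - a ^+ N = Posz (p ^ k) *: F ->
  exists2 G, dvdM (Posz (p ^ k.+2)) G &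
  (a ^+ N) ^+ p * ((a ^+ Q) ^+ p - 1) = Posz (p ^ k.+1) *: ((a ^+ N) ^+ p.-1 * F) + G.
Proof.
move=> pp k2 F hF; rewrite (expansion p hF).
have p2 : (1 < p)%N by apply: prime_gt1.
move: pp p2 hF; case: p => [|q] // pp p2 hF.
rewrite big_ord_recl /=.
eexists; last first.
  congr (_ + _).
  by rewrite expr1 bin1 subSS subn0 expr1 natz -PoszM -expnSr.
apply: dvdM_sum => i _; apply: dvdM_trans (dvdM_scaler _ _).
rewrite PoszXn natz -PoszM dvdzn -expnM /bump /=.
case: i => i hi /=; rewrite add1n.
have [hlt|heq] : (i.+2 < q.+1)%N \/ i.+2 = q.+1 by lia.
  rewrite (expnSr q.+1 k.+1); apply: dvdn_mul; last by apply: prime_dvd_bin.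
  apply: dvdn_exp2l; nia.
rewrite heq binn muln1; apply: dvdn_exp2l; nia.
Qed.

Lemma shiftE (a : R) M N Q :
  a ^+ (M + N + Q)%N - a ^+ (M + N)%N = a ^+ M * (a ^+ (N + Q)%N - a ^+ N).
Proof. by rewrite mulrBr -!exprD addnA. Qed.

Lemma M3 (a : R) p k Q : prime p -> (2 <= k)%N ->
  (exists N, dvdM (Posz (p ^ k)) (a ^+ (N + Q) - a ^+ N)) ->
  (forall N, ~ dvdM (Posz (p ^ k.+1)) (a ^+ (N + Q) - a ^+ N)) ->
  forall N2, ~ dvdM (Posz (p ^ k.+2)) (a ^+ (N2 + Q * p) - a ^+ N2).
Proof.
move=> pp k2 [N hN] hnot N2 h2.
have [G hG hE] := M3body pp k2 (dvdF_spec hN).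
set F := dvdF _ _ in hE.
have hY : dvdM (Posz (p ^ k.+2)) (a ^+ N2 * (Posz (p ^ k.+1) *: ((a ^+ N) ^+ p.-1 * F))).
  have -> : a ^+ N2 * (Posz (p ^ k.+1) *: ((a ^+ N) ^+ p.-1 * F)) =
     a ^+ N2 * ((a ^+ N) ^+ p * ((a ^+ Q) ^+ p - 1)) - a ^+ N2 * G.
    by rewrite hE mulrDr addrK.
  apply: dvdMB; last by apply: dvdR_mull.
  rewrite -powE -shiftE (addnC N2 (N * p)) shiftE; exact: dvdR_mull.
rewrite -scalerAr expnSr PoszM in hY.
have hZ := dvdM_scale (Posz (p ^ k)) (dvdM_unscale _ hY).
apply: (hnot (N2 + N * p.-1 + N)).
rewrite shiftE expnSr PoszM.
suff -> : a ^+ (N2 + N * p.-1) * (a ^+ (N + Q) - a ^+ N) =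
   Posz (p ^ k) *: (a ^+ N2 * ((a ^+ N) ^+ p.-1 * F)).
  by apply: hZ; rewrite eqz_nat -lt0n expn_gt0 prime_gt0.
by rewrite !scalerAr -(dvdF_spec hN) exprD exprM mulrA.
Qed.
End Alg2.
Lemma zmod_int m (hm : (1 < m)%N) (z : int) : ((z%:~R : 'Z_m) == 0) = (Posz m %| z)%Z.
Proof.
case: z => k.
  by rewrite -pmulrn -val_eqE /= (val_Zp_nat hm) /dvdz /= /dvdn unfold_in.
by rewrite NegzE mulrNz oppr_eq0 -pmulrn -val_eqE /= (val_Zp_nat hm) /dvdz /= /dvdn unfold_in.
Qed.

Lemma sum_ind n (c : 'I_n) (X : 'I_n -> int) : \sum_l ((l == c)%:R * X l) = X c.
Proof.
rewrite (bigD1 c) //= eqxx mul1r big1 ?addr0 // => l /negbTE ->; by rewrite mul0r.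
Qed.

Lemma sum_indr n (c : 'I_n) (X : 'I_n -> int) : \sum_l (X l * (l == c)%:R) = X c.
Proof.
rewrite (bigD1 c) //= eqxx mulr1 big1 ?addr0 // => l /negbTE ->; by rewrite mulr0.
Qed.

Section Bridge.
Variables (m n' : nat).
Hypothesis hm : (1 < m)%N.
Local Notation n := n'.+1.

Definition Amx : 'M[int]_n := \matrix_(i, j) ((j == i)%:R + (j == ordS i)%:R).
Definition red (v : 'cV[int]_n) : Zvec m n := [ffun i => (v i 0)%:~R].

Lemma red_T v : Tmap (red v) = red (Amx *m v).
Proof.
apply/ffunP => i; rewrite !ffunE !mxE.
under eq_bigr do rewrite mxE mulrDl.
by rewrite big_split /= !sum_ind intrD.
Qed.

Lemma red_iter j v : iter j (@Tmap m n) (red v) = red (Amx ^+ j *m v).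
Proof.
elim: j => [|j IH]; first by rewrite expr0 mul1mx.
by rewrite iterS IH red_T mulmxA exprS mulmxE.
Qed.

Lemma red_eq v w : red v = red w <-> dvdM (Posz m) (v - w).
Proof.
split.
  move=> h i j; rewrite (ord1 j) !mxE -(zmod_int hm) intrB.
  by have := congr1 (fun f : Zvec m n => f i) h; rewrite /= !ffunE => ->; rewrite subrr.
move=> h; apply/ffunP => i; rewrite !ffunE; apply/eqP; rewrite -subr_eq0 -intrB.
by have := h i 0; rewrite !mxE -(zmod_int hm).
Qed.

Lemma red_surj (a : Zvec m n) : exists v, red v = a.
Proof.
exists (\col_i (Posz (a i : nat))); apply/ffunP => i; rewrite !ffunE mxE.
by rewrite -pmulrn natr_Zp.
Qed.
End Bridge.

Lemma ordS_add n' (x y : 'I_n'.+1) : ordS (x + y) = ordS x + y.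
Proof.
apply/val_inj => /=.
have e1 a : a.+1 = (a + 1)%N by rewrite addn1.
by rewrite [((x + y) %% _).+1]e1 [(nat_of_ord x).+1]e1 !modnDml addnAC.
Qed.

Section Circ.
Variables (m n' : nat).
Hypothesis hm : (1 < m)%N.
Local Notation n := n'.+1.
Local Notation A := (Amx n').

Definition Smx (j : 'I_n) : 'M[int]_n := \matrix_(i, l) (i == l + j)%:R.
Definition ecol (c : 'I_n) : 'cV[int]_n := \col_i (i == c)%:R.

Lemma Smx_comm j : GRing.comm (Smx j) A.
Proof.
rewrite /GRing.comm -!mulmxE; apply/matrixP => i l; rewrite !mxE.
have e1 r : (i == r + j) = (r == i - j) by rewrite [RHS]eq_sym subr_eq.
under eq_bigr do rewrite mxE e1.
rewrite sum_ind !mxE.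
under eq_bigr do rewrite !mxE.
rewrite sum_indr.
have -> : (l == i - j) = (l + j == i) by rewrite eq_sym subr_eq eq_sym.
rewrite ordS_add; have -> : (l == ordS i - j) = (l + j == ordS i) by rewrite eq_sym subr_eq eq_sym.
by [].
Qed.

Lemma Smx_e0 j : Smx j *m ecol ord0 = ecol j.
Proof.
apply/matrixP => i k; rewrite !mxE.
under eq_bigr do rewrite !mxE.
by rewrite sum_indr add0r.
Qed.

Lemma col_ecol (E : 'M[int]_n) i j : E i j = (E *m ecol j) i 0.
Proof. by rewrite !mxE; under eq_bigr do rewrite !mxE; rewrite sum_indr. Qed.

Lemma circ d (E : 'M[int]_n) : (forall j, GRing.comm (Smx j) E) ->
  dvdM d (E *m ecol ord0) -> dvdM d E.
Proof.
move=> hc h i j; rewrite col_ecol -Smx_e0 mulmxA mulmxE -hc -mulmxE -mulmxA.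
by apply: dvdM_mull.
Qed.

Lemma commE j N Q : GRing.comm (Smx j) (A ^+ (N + Q) - A ^+ N).
Proof. by apply: commrB; apply: commrX; apply: Smx_comm. Qed.

Definition perR (d : int) Q := exists N, dvdM d (A ^+ (N + Q) - A ^+ N).

Lemma vec_per Q : is_eventual_period (red m (ecol ord0)) Q -> perR (Posz m) Q.
Proof.
move=> [N hN]; exists N; have := hN N (leqnn N).
rewrite !red_iter => /(red_eq hm); rewrite -mulmxBl => h.
by apply: circ h => j; apply: commE.
Qed.

Lemma per_vec Q : perR (Posz m) Q -> forall a : Zvec m n, is_eventual_period a Q.
Proof.
move=> [N hN] a; have [v <-] := red_surj a.
exists N => k hk; rewrite !red_iter; apply/(red_eq hm).
rewrite -mulmxBl; apply: dvdM_mulr.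
by rewrite -(subnK hk) shiftE; apply: dvdR_mull.
Qed.
End Circ.

Lemma ex_min (P : nat -> Prop) : (exists n, P n) -> exists n, P n /\ forall k, P k -> (n <= k)%N.
Proof.
move=> [n Pn]; elim: n {-2}n (leqnn n) Pn => [|b IH] n hn Pn.
  exists n; split => // k _; move: hn; rewrite leqn0 => /eqP ->; exact: leq0n.
case: (classic (exists k, P k /\ (k < n)%N)) => [[k [Pk hk]]|hno].
  by apply: (IH k) => //; lia.
exists n; split => // k Pk; case: (leqP n k) => // hk.
by exfalso; apply: hno; exists k.
Qed.

Section Pm.
Variables (m n' : nat).
Hypothesis hm : (1 < m)%N.
Local Notation n := n'.+1.
Local Notation A := (Amx n').
Local Notation delta := (red m (@ecol n' ord0)).

Lemma exists_per : exists Q, (0 < Q)%N /\ perR n' (Posz m) Q.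
Proof.
pose f (i : 'I_(#|{: Zvec m n}|).+1) := iter i (@Tmap m n) delta.
have : ~~ injectiveb f.
  apply/negP => /injectiveP /leq_card; by rewrite card_ord ltnn.
move=> /injectivePn [x [y hxy hf]].
have key : forall i j : 'I_(#|{: Zvec m n}|).+1, (i < j)%N -> f i = f j ->
    exists Q, (0 < Q)%N /\ perR n' (Posz m) Q.
  move=> i j hij hfij; exists (j - i)%N; split; first lia.
  apply: (vec_per hm); exists i => k hk.
  have -> : (k + (j - i) = (k - i) + j)%N by lia.
  rewrite iterD -[iter j _ _]/(f j) -hfij /f -iterD; congr iter; lia.
case: (ltngtP x y) => h; [exact: key h hf | exact: key h (esym hf) |].
by move: hxy; rewrite (val_inj h) eqxx.
Qed.

Lemma perR_mono d N Q K : dvdM d (A ^+ (N + Q) - A ^+ N) ->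
  dvdM d (A ^+ (K + N + Q) - A ^+ (K + N)).
Proof. by move=> h; rewrite shiftE; apply: dvdR_mull. Qed.

Lemma perR_sub d Q1 Q2 : perR n' d Q1 -> perR n' d Q2 -> (Q1 <= Q2)%N -> perR n' d (Q2 - Q1).
Proof.
move=> [N1 h1] [N2 h2] hQ; exists (N1 + N2 + Q1).
have h1' := perR_mono N2 h1; have h2' := perR_mono N1 h2.
rewrite (addnC N2 N1) in h1'.
have -> : (N1 + N2 + Q1 + (Q2 - Q1) = N1 + N2 + Q2)%N by lia.
have -> : A ^+ (N1 + N2 + Q2) - A ^+ (N1 + N2 + Q1) =
   (A ^+ (N1 + N2 + Q2) - A ^+ (N1 + N2)) - (A ^+ (N1 + N2 + Q1) - A ^+ (N1 + N2)).
  by rewrite opprB addrA subrK.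
exact: dvdMB.
Qed.

Lemma per_dvd d L Q : (0 < L)%N -> perR n' d L ->
  (forall Q', (0 < Q')%N -> perR n' d Q' -> (L <= Q')%N) -> perR n' d Q -> (L %| Q)%N.
Proof.
move=> L0 hL hmin; elim: Q {-2}Q (leqnn Q) => [|b IH] Q hQ hper.
  by move: hQ; rewrite leqn0 => /eqP ->; rewrite dvdn0.
case: (posnP Q) => [->|Q0]; first by rewrite dvdn0.
have hLQ := hmin Q Q0 hper.
rewrite -(subnK hLQ) (dvdn_addl _ (dvdnn L)); apply: IH; first lia.
exact: perR_sub.
Qed.

Lemma cycle_length_spec (a : Zvec m n) : is_cycle_length a (cycle_length a).
Proof.
apply: epsilon_spec.
have [Q [Q0 hQ]] := exists_per.
have [x [[x0 hx] hmin]] := @ex_min (fun x => (0 < x)%N /\ is_eventual_period a x)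
  (ex_intro _ Q (conj Q0 (per_vec hm hQ a))).
by exists x; split; [|split] => // P P0 hP; apply: hmin.
Qed.

Lemma Pmax_spec : [/\ (0 < Pmax m n)%N, perR n' (Posz m) (Pmax m n) &
  forall Q, (0 < Q)%N -> perR n' (Posz m) Q -> (Pmax m n <= Q)%N].
Proof.
have [L [[L0 hL] hmin]] := @ex_min (fun Q => (0 < Q)%N /\ perR n' (Posz m) Q) exists_per.
suff -> : Pmax m n = L by split => // Q Q0 hQ; apply: hmin.
apply/eqP; rewrite eqn_leq; apply/andP; split.
  apply/bigmax_leqP => a _.
  by have [_ [_ h]] := cycle_length_spec a; apply: h => //; apply: per_vec.
apply: leq_trans (leq_bigmax delta).
have [c0 [hc _]] := cycle_length_spec delta.
by apply: hmin; split => //; apply: vec_per.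
Qed.
End Pm.

Section Final.
Variables (p n' : nat).
Hypothesis pp : prime p.
Local Notation n := n'.+1.
Local Notation L j := (Pmax (p ^ j) n).
Local Notation A := (Amx n').

Lemma pgt1 j : (0 < j)%N -> (1 < p ^ j)%N.
Proof. by move=> j0; rewrite -(exp1n j) ltn_exp2r // prime_gt1. Qed.

Lemma weakR j Q : perR n' (Posz (p ^ j.+1)) Q -> perR n' (Posz (p ^ j)) Q.
Proof.
move=> [N h]; exists N; apply: dvdM_trans h.
by rewrite dvdzn expnS dvdn_mull.
Qed.

Lemma M2R j Q : (0 < j)%N -> perR n' (Posz (p ^ j)) Q -> perR n' (Posz (p ^ j.+1)) (Q * p).
Proof. by move=> j0 [N h]; exists (N * p); apply: M2. Qed.

Lemma step1 j : (0 < j)%N -> L j.+1 = L j \/ L j.+1 = (p * L j)%N.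
Proof.
move=> j0.
have [a0 ha hamin] := Pmax_spec n' (pgt1 j0).
have [b0 hb hbmin] := Pmax_spec n' (pgt1 (ltn0Sn j)).
have hab : (L j %| L j.+1)%N by apply: per_dvd ha hamin (weakR hb).
have hba : (L j.+1 %| L j * p)%N by apply: per_dvd hb hbmin (M2R j0 ha).
have [c hc] : exists c, L j.+1 = (c * L j)%N by exists (L j.+1 %/ L j)%N; rewrite divnK.
rewrite hc mulnC in hba; rewrite dvdn_pmul2l // in hba.
have /primeP [_ hd] := pp.
rewrite hc; by case/orP: (hd c hba) => /eqP ->; [left; rewrite mul1n | right; rewrite mulnC].
Qed.

Lemma step2 j : (2 <= j)%N -> L j.+1 = (p * L j)%N -> L j.+2 = (p * L j.+1)%N.
Proof.
move=> j2 hj.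
have j0 : (0 < j)%N by lia.
have [a0 ha hamin] := Pmax_spec n' (pgt1 j0).
have [b0 hb hbmin] := Pmax_spec n' (pgt1 (ltn0Sn j)).
have [c0 hc hcmin] := Pmax_spec n' (pgt1 (ltn0Sn j.+1)).
have hnot : forall N, ~ dvdM (Posz (p ^ j.+1)) (A ^+ (N + L j) - A ^+ N).
  move=> N hN; have := hbmin _ a0 (ex_intro _ N hN); rewrite hj.
  have := prime_gt1 pp; nia.
have h3 := M3 pp j2 ha hnot.
case: (step1 (ltn0Sn j)) => // heq.
exfalso; move: hc; rewrite heq hj mulnC => -[N hN]; exact: h3 hN.
Qed.

Lemma step3 N : (2 <= N)%N -> L N.+1 = (p * L N)%N ->
  forall j : nat, (0 < j)%N -> L (N + j) = (p ^ j * L N)%N.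
Proof.
move=> N2 hN.
have aux : forall j, L (N + j).+1 = (p * L (N + j))%N.
  elim=> [|j IH]; first by rewrite addn0.
  rewrite addnS; apply: step2 => //; lia.
move=> j _; elim: j => [|j IH]; first by rewrite addn0 expn0 mul1n.
by rewrite addnS aux IH expnS mulnA.
Qed.
End Final.

Theorem theorem5p1 (p k n : nat) (hp : prime p) (hk : (0 < k)%N) (hn : (0 < n)%N) :
  [/\ Pmax (p ^ k.+1) n = Pmax (p ^ k) n \/ Pmax (p ^ k.+1) n = (p * Pmax (p ^ k) n)%N,
      (2 <= k)%N -> Pmax (p ^ k.+1) n = (p * Pmax (p ^ k) n)%N ->
        Pmax (p ^ k.+2) n = (p * Pmax (p ^ k.+1) n)%N
    & forall N : nat, (2 <= N)%N ->
        Pmax (p ^ N.+1) n = (p * Pmax (p ^ N) n)%N ->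
        forall j : nat, (0 < j)%N -> Pmax (p ^ (N + j)) n = (p ^ j * Pmax (p ^ N) n)%N].
Proof.
case: n hn => [//|n'] _; split.
- exact: step1.
- exact: step2.
- exact: step3.
Qed.
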